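(* Let $V$ be a set of variables and $\mathcal{R}=\{r_1,\ldots,r_m\}$ be a set of transition rules on $V$. Then $s \xrightarrow{r_i} s'$ iff the sequent $\llbracket r_1\rrbracket @ 0,\ldots,\llbracket r_m\rrbracket @ 0;\ \llbracket s\rrbracket @ w \vdash \delta_1\llbracket s'\rrbracket @ w$ is provable in HyLL.
   Context: HyLL is hybrid (intuitionistic) linear logic with sequents $\Gamma;\Delta\vdash C@w$ ($\Gamma$ unbounded context, $\Delta$ linear context) and hybrid connectives $A\ \mathsf{at}\ u$ and $\downarrow u.A$; worlds here form the monoid $\langle\mathbb{N},+,0\rangle$ (written $u.v$ for composition). A state $s$ over $V=\{a_1,\ldots,a_n\}$ is a conjunction $p_1(a_1)\wedge\cdots\wedge p_n(a_n)$ with each $p_i$ either present or absent; a transition rule $r:s\to s'$ enables the transition $s\xrightarrow{r}s'$. Encoding into HyLL: $\llbracket p_i(a_i)\rrbracket = p_i(a_i)$ (an atom), $\llbracket s\rrbracket=\bigotimes_{i\in 1..n}\llbracket p_i(a_i)\rrbracket$, $\llbracket r: s\to s'\rrbracket = \forall w.\big((\llbracket s\rrbracket\ \mathsf{at}\ w)\multimap \delta_1(\llbracket s'\rrbracket)\ \mathsf{at}\ w\big)$, where the delay connective is $\delta_v A = \downarrow u.(A\ \mathsf{at}\ u.v)$. *)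

(* Defs.v *)
From Stdlib Require Import List Arith PeanoNat.
From Stdlib Require Export Permutation.
Import ListNotations.

(* World expressions: bound world variables (de Bruijn indices), free
   world variables (eigenvariables), constants of the monoid nat, and
   composition u.v (= u + v).                                          *)
Inductive wexp : Type :=
| WBound : nat -> wexp
| WFree  : nat -> wexp
| WConst : nat -> wexp
| WCat   : wexp -> wexp -> wexp.

Fixpoint weval (rho : nat -> nat) (e : wexp) : nat :=
  match e with
  | WBound _ => 0
  | WFree x => rho x
  | WConst k => k
  | WCat a b => weval rho a + weval rho b
  end.

Definition weq (u v : wexp) : Prop := forall rho, weval rho u = weval rho v.

Fixpoint wlc (e : wexp) : Prop :=
  match e with
  | WBound _ => False
  | WFree _ | WConst _ => True
  | WCat a b => wlc a /\ wlc b
  end.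

Fixpoint wfv (e : wexp) : list nat :=
  match e with
  | WFree x => [x]
  | WCat a b => wfv a ++ wfv b
  | _ => []
  end.

(* Atoms: the predicates present/absent applied to a variable a_i
   (a_i is represented by its index i). *)
Inductive pred_sym : Type := Present | Absent.

Inductive prop : Type :=
| Atom   : pred_sym -> nat -> prop
| Tensor : prop -> prop -> prop
| One    : prop
| Lolli  : prop -> prop -> prop
| With   : prop -> prop -> prop
| Top    : prop
| Plus   : prop -> prop -> prop
| Zero   : prop
| Bang   : prop -> prop
| At     : prop -> wexp -> prop
| Down   : prop -> prop                  (* down u. A   (binds WBound 0) *)
| WAll   : prop -> prop                  (* forall u. A (binds WBound 0) *)
| WEx    : prop -> prop.                 (* exists u. A (binds WBound 0) *)

Definition wopen (k : nat) (e : wexp) : wexp -> wexp :=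
  fix f w := match w with
  | WBound j => if Nat.eqb j k then e else WBound j
  | WCat a b => WCat (f a) (f b)
  | w => w
  end.

Fixpoint popen (k : nat) (e : wexp) (A : prop) : prop :=
  match A with
  | Atom p i => Atom p i
  | Tensor A B => Tensor (popen k e A) (popen k e B)
  | One => One
  | Lolli A B => Lolli (popen k e A) (popen k e B)
  | With A B => With (popen k e A) (popen k e B)
  | Top => Top
  | Plus A B => Plus (popen k e A) (popen k e B)
  | Zero => Zero
  | Bang A => Bang (popen k e A)
  | At A u => At (popen k e A) (wopen k e u)
  | Down A => Down (popen (S k) e A)
  | WAll A => WAll (popen (S k) e A)
  | WEx A => WEx (popen (S k) e A)
  end.

Definition wshift (c : nat) : wexp -> wexp :=
  fix f w := match w with
  | WBound j => if Nat.leb c j then WBound (S j) else WBound j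
  | WCat a b => WCat (f a) (f b)
  | w => w
  end.

Fixpoint pshift (c : nat) (A : prop) : prop :=
  match A with
  | Atom p i => Atom p i
  | Tensor A B => Tensor (pshift c A) (pshift c B)
  | One => One
  | Lolli A B => Lolli (pshift c A) (pshift c B)
  | With A B => With (pshift c A) (pshift c B)
  | Top => Top
  | Plus A B => Plus (pshift c A) (pshift c B)
  | Zero => Zero
  | Bang A => Bang (pshift c A)
  | At A u => At (pshift c A) (wshift c u)
  | Down A => Down (pshift (S c) A)
  | WAll A => WAll (pshift (S c) A)
  | WEx A => WEx (pshift (S c) A)
  end.

Fixpoint pfv (A : prop) : list nat :=
  match A with
  | Atom _ _ | One | Top | Zero => []
  | Tensor A B | Lolli A B | With A B | Plus A B => pfv A ++ pfv B
  | Bang A | Down A | WAll A | WEx A => pfv A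
  | At A u => pfv A ++ wfv u
  end.

Definition ctx := list (prop * wexp).

Definition ctxfv (G : ctx) : list nat :=
  flat_map (fun Au => pfv (fst Au) ++ wfv (snd Au)) G.

(* The HyLL sequent calculus  G ; D |- C @ w  (cut-free; cut is admissible).
   G: unbounded context, D: linear context (a multiset, via exchange). *)
Inductive hyll : ctx -> ctx -> prop -> wexp -> Prop :=
| h_exch : forall G D D' C w,
    Permutation D D' -> hyll G D C w -> hyll G D' C w
| h_init : forall G p i u w,
    weq u w -> hyll G [(Atom p i, u)] (Atom p i) w
| h_copy : forall G D A u C w,
    In (A, u) G -> hyll G ((A, u) :: D) C w -> hyll G D C w
| h_tensorR : forall G D1 D2 A B w,
    hyll G D1 A w -> hyll G D2 B w -> hyll G (D1 ++ D2) (Tensor A B) w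
| h_tensorL : forall G D A B u C w,
    hyll G ((A, u) :: (B, u) :: D) C w -> hyll G ((Tensor A B, u) :: D) C w
| h_oneR : forall G w, hyll G [] One w
| h_oneL : forall G D u C w,
    hyll G D C w -> hyll G ((One, u) :: D) C w
| h_lolliR : forall G D A B w,
    hyll G ((A, w) :: D) B w -> hyll G D (Lolli A B) w
| h_lolliL : forall G D1 D2 A B u C w,
    hyll G D1 A u -> hyll G ((B, u) :: D2) C w ->
    hyll G ((Lolli A B, u) :: D1 ++ D2) C w
| h_withR : forall G D A B w,
    hyll G D A w -> hyll G D B w -> hyll G D (With A B) w
| h_withL1 : forall G D A B u C w,
    hyll G ((A, u) :: D) C w -> hyll G ((With A B, u) :: D) C w
| h_withL2 : forall G D A B u C w,
    hyll G ((B, u) :: D) C w -> hyll G ((With A B, u) :: D) C w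
| h_topR : forall G D w, hyll G D Top w
| h_plusR1 : forall G D A B w, hyll G D A w -> hyll G D (Plus A B) w
| h_plusR2 : forall G D A B w, hyll G D B w -> hyll G D (Plus A B) w
| h_plusL : forall G D A B u C w,
    hyll G ((A, u) :: D) C w -> hyll G ((B, u) :: D) C w ->
    hyll G ((Plus A B, u) :: D) C w
| h_zeroL : forall G D u C w, hyll G ((Zero, u) :: D) C w
| h_bangR : forall G A w, hyll G [] A w -> hyll G [] (Bang A) w
| h_bangL : forall G D A u C w,
    hyll ((A, u) :: G) D C w -> hyll G ((Bang A, u) :: D) C w
| h_atR : forall G D A u w,
    hyll G D A u -> hyll G D (At A u) w
| h_atL : forall G D A u v C w,
    hyll G ((A, u) :: D) C w -> hyll G ((At A u, v) :: D) C w
| h_downR : forall G D A w,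
    hyll G D (popen 0 w A) w -> hyll G D (Down A) w
| h_downL : forall G D A u C w,
    hyll G ((popen 0 u A, u) :: D) C w -> hyll G ((Down A, u) :: D) C w
| h_allR : forall G D A w x,
    ~ In x (ctxfv G ++ ctxfv D ++ pfv A ++ wfv w) ->
    hyll G D (popen 0 (WFree x) A) w -> hyll G D (WAll A) w
| h_allL : forall G D A e u C w,
    wlc e -> hyll G ((popen 0 e A, u) :: D) C w ->
    hyll G ((WAll A, u) :: D) C w
| h_exR : forall G D A e w,
    wlc e -> hyll G D (popen 0 e A) w -> hyll G D (WEx A) w
| h_exL : forall G D A u C w x,
    ~ In x (ctxfv G ++ ctxfv D ++ pfv A ++ wfv u ++ pfv C ++ wfv w) ->
    hyll G ((popen 0 (WFree x) A, u) :: D) C w ->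
    hyll G ((WEx A, u) :: D) C w.

(* States over V = {a_1,...,a_n}: a list of n booleans; the i-th entry is
   true if p_i = present, false if p_i = absent. *)
Definition state := list bool.

Definition enc_lit (b : bool) (i : nat) : prop :=
  Atom (if b then Present else Absent) i.

Fixpoint enc_lits (k : nat) (s : state) : list prop :=
  match s with
  | [] => []
  | b :: s' => enc_lit b k :: enc_lits (S k) s'
  end.

Fixpoint tensor_list (l : list prop) : prop :=
  match l with
  | [] => One
  | [A] => A
  | A :: l' => Tensor A (tensor_list l')
  end.

Definition enc_state (s : state) : prop := tensor_list (enc_lits 0 s).

(* delay:  delta_v A = down u. (A at u.v) *)
Definition delta (v : nat) (A : prop) : prop :=
  Down (At (pshift 0 A) (WCat (WBound 0) (WConst v))).

Record rule : Type := mk_rule { pre : state; post : state }.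

Definition transition (r : rule) (s s' : state) : Prop :=
  pre r = s /\ post r = s'.

(* [[ r : s -> s' ]] = forall w. ((s at w) -o (delta_1 s') at w) *)
Definition enc_rule (r : rule) : prop :=
  WAll (Lolli (At (enc_state (pre r)) (WBound 0))
              (At (delta 1 (enc_state (post r))) (WBound 0))).

Definition rules_ctx (R : list rule) : ctx :=
  map (fun r => (enc_rule r, WConst 0)) R.

(* Main.v *)
Require Import Defs.
From Stdlib Require Import List Arith Lia PeanoNat.
Import ListNotations.

Definition res := (pred_sym * nat * nat)%type.
Definition sym (b : bool) : pred_sym := if b then Present else Absent.

Fixpoint atoms (k : nat) (s : state) (v : nat) : list res :=
  match s with
  | [] => []
  | b :: s' => (sym b, k, v) :: atoms (S k) s' v
  end.

Definition step (R : list rule) (M N : list res) : Prop :=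
  exists r v K, In r R /\ Permutation M (atoms 0 (pre r) v ++ K) /\
                Permutation N (atoms 0 (post r) (v + 1) ++ K).

Inductive red (R : list rule) : list res -> list res -> Prop :=
| red0 : forall M N, Permutation M N -> red R M N
| redS : forall M N K, step R M N -> red R N K -> red R M K.

Lemma red_refl R M : red R M M.
Proof. apply red0; apply Permutation_refl. Qed.

Lemma red_permL R M M' N : Permutation M M' -> red R M' N -> red R M N.
Proof.
  intros HP H; inversion H; subst.
  - apply red0; eapply perm_trans; eauto.
  - destruct H0 as (r & v & K' & Hin & Q1 & Q2).
    eapply redS; [|eauto]. exists r, v, K'; split; auto; split; auto.
    eapply perm_trans; eauto.
Qed.

Lemma red_trans R M N K : red R M N -> red R N K -> red R M K.
Proof.
  induction 1; intros HK.
  - eapply red_permL; eauto.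
  - eapply redS; eauto.
Qed.

Lemma step_app R M N L : step R M N -> step R (M ++ L) (N ++ L).
Proof.
  intros (r & v & K & Hin & H1 & H2). exists r, v, (K ++ L).
  split; auto. rewrite !app_assoc. split; apply Permutation_app_tail; auto.
Qed.

Lemma red_app_l R M M' N : red R M M' -> red R (M ++ N) (M' ++ N).
Proof.
  induction 1.
  - apply red0; apply Permutation_app_tail; auto.
  - eapply redS; [apply step_app; eauto| auto].
Qed.

Lemma red_app_r R M N N' : red R N N' -> red R (M ++ N) (M ++ N').
Proof.
  intros H. eapply red_permL; [apply Permutation_app_comm|].
  eapply red_trans; [apply red_app_l; eauto|]. apply red0, Permutation_app_comm.
Qed.

Lemma red_app R M M' N N' : red R M M' -> red R N N' -> red R (M ++ N) (M' ++ N').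
Proof.
  intros; eapply red_trans; [apply red_app_l; eauto| apply red_app_r; auto].
Qed.

Fixpoint wv (env : list nat) (rho : nat -> nat) (e : wexp) : nat :=
  match e with
  | WBound j => nth j env 0
  | WFree x => rho x
  | WConst k => k
  | WCat a b => wv env rho a + wv env rho b
  end.

Fixpoint sem (R : list rule) (env : list nat) (rho : nat -> nat) (A : prop)
  (u : nat) (M : list res) {struct A} : Prop :=
  match A with
  | Atom p i => red R M [(p, i, u)]
  | Tensor A B => exists M1 M2, red R M (M1 ++ M2) /\ sem R env rho A u M1 /\ sem R env rho B u M2
  | One => red R M []
  | Lolli A B => forall N, sem R env rho A u N -> sem R env rho B u (M ++ N)
  | With A B => sem R env rho A u M /\ sem R env rho B u M
  | Top => True
  | Plus A B => sem R env rho A u M \/ sem R env rho B u M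
  | Zero => False
  | Bang A => red R M [] /\ sem R env rho A u []
  | At A e => sem R env rho A (wv env rho e) M
  | Down A => sem R (u :: env) rho A u M
  | WAll A => forall v, sem R (v :: env) rho A u M
  | WEx A => exists v, sem R (v :: env) rho A u M
  end.

Lemma sem_red R A : forall env rho u M M', red R M M' -> sem R env rho A u M' -> sem R env rho A u M.
Proof.
  induction A; simpl; intros env rho u M M' Hr H; try tauto.
  - eapply red_trans; eauto.
  - destruct H as (M1 & M2 & H1 & H2 & H3). exists M1, M2; split; auto. eapply red_trans; eauto.
  - eapply red_trans; eauto.
  - intros N HN. eapply IHA2; [apply red_app_l; eauto| auto].
  - destruct H; split; eauto.
  - destruct H; [left|right]; eauto.
  - destruct H; split; auto. eapply red_trans; eauto.
  - eauto.
  - eauto.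
  - intros v; eauto.
  - destruct H as [v H]; exists v; eauto.
Qed.

Lemma wv_nil rho e : wv [] rho e = weval rho e.
Proof. induction e; simpl; auto. destruct n; auto. Qed.

Fixpoint wbnd (k : nat) (e : wexp) : Prop :=
  match e with
  | WBound j => j < k
  | WCat a b => wbnd k a /\ wbnd k b
  | _ => True
  end.

Fixpoint plc (k : nat) (A : prop) : Prop :=
  match A with
  | Atom _ _ | One | Top | Zero => True
  | Tensor A B | Lolli A B | With A B | Plus A B => plc k A /\ plc k B
  | Bang A => plc k A
  | At A u => plc k A /\ wbnd k u
  | Down A | WAll A | WEx A => plc (S k) A
  end.

Lemma wbnd_mono k e : wbnd k e -> forall k', k <= k' -> wbnd k' e.
Proof. induction e; simpl; intros; try tauto; try lia. destruct H; split; eauto. Qed.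

Lemma wlc_wbnd e : wlc e -> wbnd 0 e.
Proof. induction e; simpl; intuition. Qed.

Lemma wv_closed env rho e : wbnd 0 e -> wv env rho e = weval rho e.
Proof. induction e; simpl; intros; try tauto; try lia. destruct H; rewrite IHe1, IHe2; auto. Qed.

Lemma plc_popen A : forall k e, plc (S k) A -> wbnd 0 e -> plc k (popen k e A).
Proof.
  induction A; simpl; intros k e H He; try solve [intuition].
  destruct H as [H1 H2]. split; auto.
  clear -H2 He. induction w; simpl in *; intuition.
  destruct (Nat.eqb_spec n k). apply (wbnd_mono 0); auto; lia. simpl; lia.
Qed.

Lemma wv_wopen env rho k e t : length env = k -> wbnd 0 e ->
  wv env rho (wopen k e t) = wv (env ++ [weval rho e]) rho t.
Proof.
  intros Hl He. induction t; simpl; auto.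
  destruct (Nat.eqb_spec n k).
  - subst. rewrite app_nth2 by lia. rewrite Nat.sub_diag. simpl. apply wv_closed; auto.
  - simpl. destruct (Nat.lt_ge_cases n k).
    + rewrite app_nth1 by lia; auto.
    + rewrite !nth_overflow; auto; rewrite ?length_app; simpl; lia.
Qed.

Lemma sem_popen R A : forall env k rho e u M, length env = k -> wbnd 0 e ->
  (sem R env rho (popen k e A) u M <-> sem R (env ++ [weval rho e]) rho A u M).
Proof.
  induction A; simpl; intros env k rho e u M Hl He; try tauto.
  - split; intros (M1 & M2 & H1 & H2 & H3); exists M1, M2; split; auto;
      split; [apply (IHA1 env k)|apply (IHA2 env k)|apply (IHA1 env k) |apply (IHA2 env k)]; auto.
  - split; intros H N HN; apply (IHA2 env k); auto; apply H; apply (IHA1 env k); auto.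
  - rewrite (IHA1 env k), (IHA2 env k); tauto.
  - rewrite (IHA1 env k), (IHA2 env k); tauto.
  - rewrite (IHA env k); tauto.
  - rewrite (wv_wopen env rho k e w Hl He). apply (IHA env k); auto.
  - apply (IHA (u :: env) (S k)); simpl; auto.
  - split; intros H v; apply (IHA (v :: env) (S k)); simpl; auto; apply H.
  - split; intros [v H]; exists v; apply (IHA (v :: env) (S k)) in H || apply (IHA (v :: env) (S k)); simpl; auto.
Qed.

Lemma wv_fv env rho rho' e : (forall y, In y (wfv e) -> rho y = rho' y) -> wv env rho e = wv env rho' e.
Proof.
  induction e; simpl; intros H; auto.
  rewrite IHe1, IHe2; auto; intros; apply H; apply in_or_app; auto.
Qed.

Lemma sem_fv R A : forall env rho rho' u M, (forall y, In y (pfv A) -> rho y = rho' y) ->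
  (sem R env rho A u M <-> sem R env rho' A u M).
Proof.
  induction A; simpl; intros env rho rho' u M H; try tauto;
  try (assert (H1 : forall y, In y (pfv A1) -> rho y = rho' y) by (intros; apply H; apply in_or_app; auto);
       assert (H2 : forall y, In y (pfv A2) -> rho y = rho' y) by (intros; apply H; apply in_or_app; auto)).
  - split; intros (M1 & M2 & K1 & K2 & K3); exists M1, M2; split; auto; split;
      solve [apply (IHA1 _ rho rho'); auto | apply (IHA2 _ rho rho'); auto].
  - split; intros K N HN; apply (IHA2 _ rho rho'); auto; apply K; apply (IHA1 _ rho rho'); auto.
  - rewrite (IHA1 _ rho rho'), (IHA2 _ rho rho'); auto; tauto.
  - rewrite (IHA1 _ rho rho'), (IHA2 _ rho rho'); auto; tauto.
  - rewrite (IHA _ rho rho'); auto; tauto.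
  - rewrite (wv_fv env rho rho' w) by (intros; apply H; apply in_or_app; auto).
    apply IHA; intros; apply H; apply in_or_app; auto.
  - apply IHA; auto.
  - split; intros K v; apply (IHA _ rho rho'); auto; apply K.
  - split; intros [v K]; exists v; apply (IHA _ rho rho') in K || apply (IHA _ rho rho'); auto.
Qed.

Definition wfc (G : ctx) := Forall (fun Au => plc 0 (fst Au) /\ wbnd 0 (snd Au)) G.

Lemma Perm_concat {A} (l l' : list (list A)) : Permutation l l' -> Permutation (concat l) (concat l').
Proof.
  induction 1; simpl; auto.
  - apply Permutation_app_head; auto.
  - rewrite !app_assoc. apply Permutation_app_tail, Permutation_app_comm.
  - eapply perm_trans; eauto.
Qed.

Lemma Forall2_impl_in {A B} (P Q : A -> B -> Prop) l1 l2 :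
  Forall2 P l1 l2 -> (forall a b, In a l1 -> P a b -> Q a b) -> Forall2 Q l1 l2.
Proof.
  induction 1; intros H'; constructor; auto.
  - apply H'; simpl; auto.
  - apply IHForall2; intros; apply H'; simpl; auto.
Qed.

Definition upd (rho : nat -> nat) x v := fun y => if Nat.eqb y x then v else rho y.

Lemma upd_other rho x v y : y <> x -> upd rho x v y = rho y.
Proof. unfold upd; intros; destruct (Nat.eqb_spec y x); congruence. Qed.

Lemma weval_fv rho rho' e : (forall y, In y (wfv e) -> rho y = rho' y) -> weval rho e = weval rho' e.
Proof. rewrite <- !wv_nil. apply wv_fv. Qed.

Definition sctx R rho (D : ctx) Ms :=
  Forall2 (fun Au M => sem R [] rho (fst Au) (weval rho (snd Au)) M) D Ms.

Lemma in_ctxfv y A u D : In (A, u) D -> In y (pfv A ++ wfv u) -> In y (ctxfv D).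
Proof. intros; unfold ctxfv; apply in_flat_map; exists (A, u); auto. Qed.

Lemma sctx_upd R rho D Ms x v : ~ In x (ctxfv D) -> sctx R rho D Ms -> sctx R (upd rho x v) D Ms.
Proof.
  intros Hx H. eapply Forall2_impl_in; [exact H|]. intros [A u] M Hin HM; simpl in *.
  assert (E : forall y, In y (pfv A ++ wfv u) -> rho y = upd rho x v y).
  { intros y Hy. rewrite upd_other; auto. intros ->. apply Hx. eapply in_ctxfv; eauto. }
  rewrite <- (weval_fv rho) by (intros; apply E; apply in_or_app; auto).
  apply (sem_fv R A [] rho); auto. intros; apply E; apply in_or_app; auto.
Qed.

Lemma sG_upd R rho G x v : ~ In x (ctxfv G) ->
  (forall A u, In (A, u) G -> sem R [] rho A (weval rho u) []) ->
  (forall A u, In (A, u) G -> sem R [] (upd rho x v) A (weval (upd rho x v) u) []).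
Proof.
  intros Hx H A u Hin.
  assert (E : forall y, In y (pfv A ++ wfv u) -> rho y = upd rho x v y).
  { intros y Hy. rewrite upd_other; auto. intros ->. apply Hx. eapply in_ctxfv; eauto. }
  rewrite <- (weval_fv rho) by (intros; apply E; apply in_or_app; auto).
  apply (sem_fv R A [] rho); auto. intros; apply E; apply in_or_app; auto.
Qed.

Ltac nin H := let K := fresh in intro K; apply H; rewrite ?in_app_iff; tauto.

Lemma sound R : forall G D C w, hyll G D C w -> wfc G -> wfc D -> plc 0 C -> wbnd 0 w ->
  forall rho, (forall A u, In (A, u) G -> sem R [] rho A (weval rho u) []) ->
  forall Ms, sctx R rho D Ms -> sem R [] rho C (weval rho w) (concat Ms).
Proof.
  unfold sctx.
  induction 1; intros HG HD HC Hw rho HsG Ms HMs.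
  -
    destruct (Permutation_Forall2 (Permutation_sym H) HMs) as (Ms0 & HP & HF).
    eapply sem_red; [apply red0, Perm_concat, HP|].
    apply IHhyll; auto. eapply Permutation_Forall; [apply Permutation_sym; eauto| auto].
  -
    inversion HMs as [|? M0 ? Ms0 HM0 HMs0]; subst. inversion HMs0; subst. simpl in *. rewrite app_nil_r.
    rewrite <- (H rho). auto.
  -
    refine (IHhyll HG _ HC Hw rho HsG ([] :: Ms) _).
    + constructor; auto. eapply Forall_forall in HG; eauto.
    + constructor; auto; simpl; apply HsG; auto.
  -
    apply Forall2_app_inv_l in HMs as (Ms1 & Ms2 & H1 & H2 & ->).
    apply Forall_app in HD as [HD1 HD2]. simpl in HC.
    exists (concat Ms1), (concat Ms2). rewrite concat_app. split; [apply red_refl|].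
    split; [apply IHhyll1|apply IHhyll2]; tauto.
  -
    inversion HMs as [|? M0 ? Ms0 HM0 HMs0]; subst. inversion HD as [|? ? HD0 HD1]; subst. simpl in *.
    destruct HM0 as (M1 & M2 & K1 & K2 & K3).
    eapply sem_red; [apply red_app_l; eauto|]. rewrite <- app_assoc.
    apply (IHhyll HG) with (Ms := M1 :: M2 :: Ms0); auto.
    repeat constructor; tauto.
  -
    inversion HMs as [|? M0 ? Ms0 HM0 HMs0]; subst. simpl. apply red_refl.
  -
    inversion HMs as [|? M0 ? Ms0 HM0 HMs0]; subst. inversion HD as [|? ? HD0 HD1]; subst. simpl in *.
    eapply sem_red; [apply red_app_l; eauto|]. simpl. apply IHhyll; auto.
  -
    simpl in *. intros N HN.
    assert (E : concat Ms ++ N = concat (Ms ++ [N])) by (rewrite concat_app; simpl; rewrite app_nil_r; auto).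
    rewrite E. eapply sem_red; [apply red0, Perm_concat, Permutation_sym, Permutation_cons_append|].
    apply IHhyll; auto; try tauto; constructor; auto; tauto.
  -
    inversion HMs as [|? M0 ? Ms0 HM0 HMs0]; subst. inversion HD as [|? ? HD0 HD1]; subst. simpl in *.
    apply Forall2_app_inv_l in HMs0 as (Ms1 & Ms2 & K1 & K2 & ->).
    apply Forall_app in HD1 as [HD1 HD2].
    rewrite concat_app, app_assoc.
    apply (IHhyll2 HG) with (Ms := (M0 ++ concat Ms1) :: Ms2); auto.
    + constructor; auto; simpl; tauto.
    + constructor; auto. simpl. apply HM0. apply IHhyll1; auto; tauto.
  -
    simpl in *; split; [apply IHhyll1|apply IHhyll2]; tauto.
  - inversion HMs as [|? M0 ? Ms0 HM0 HMs0]; subst. inversion HD as [|? ? HD0 HD1]; subst. simpl in *.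
    apply (IHhyll HG) with (Ms := M0 :: Ms0); auto; constructor; auto; simpl; tauto.
  - inversion HMs as [|? M0 ? Ms0 HM0 HMs0]; subst. inversion HD as [|? ? HD0 HD1]; subst. simpl in *.
    apply (IHhyll HG) with (Ms := M0 :: Ms0); auto; constructor; auto; simpl; tauto.
  - simpl; auto.
  - simpl in *; left; apply IHhyll; tauto.
  - simpl in *; right; apply IHhyll; tauto.
  - inversion HMs as [|? M0 ? Ms0 HM0 HMs0]; subst. inversion HD as [|? ? HD0 HD1]; subst. simpl in *.
    destruct HM0 as [K|K].
    + apply (IHhyll1 HG) with (Ms := M0 :: Ms0); auto; constructor; auto; simpl; tauto.
    + apply (IHhyll2 HG) with (Ms := M0 :: Ms0); auto; constructor; auto; simpl; tauto.
  - inversion HMs as [|? M0 ? Ms0 HM0 HMs0]; subst. simpl in *. tauto.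
  -
    inversion HMs as [|? M0 ? Ms0 HM0 HMs0]; subst. simpl in *. split; [apply red_refl|]. apply (IHhyll HG HD) with (Ms := []); auto.
  -
    inversion HMs as [|? M0 ? Ms0 HM0 HMs0]; subst. inversion HD as [|? ? HD0 HD1]; subst. simpl in *.
    destruct HM0 as [K1 K2].
    eapply sem_red; [apply red_app_l; eauto|]. simpl. apply IHhyll; auto.
    + constructor; auto; simpl; tauto.
    + intros A0 u0 [E|E]; [inversion E; subst; auto | auto].
  -
    simpl in *. rewrite wv_nil. apply IHhyll; tauto.
  -
    inversion HMs as [|? M0 ? Ms0 HM0 HMs0]; subst. inversion HD as [|? ? HD0 HD1]; subst. simpl in *.
    apply (IHhyll HG) with (Ms := M0 :: Ms0); auto. constructor; auto; simpl; tauto.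
    constructor; auto. simpl. rewrite <- wv_nil; auto.
  -
    simpl in *. apply (sem_popen R A [] 0 rho w) ; auto.
    apply IHhyll; auto. apply plc_popen; auto.
  -
    inversion HMs as [|? M0 ? Ms0 HM0 HMs0]; subst. inversion HD as [|? ? HD0 HD1]; subst. simpl in *.
    apply (IHhyll HG) with (Ms := M0 :: Ms0); auto.
    + constructor; auto; simpl. split; [apply plc_popen|]; tauto.
    + constructor; auto. simpl. apply (sem_popen R A [] 0 rho u); auto; tauto.
  -
    simpl in *. intros v.
    assert (K := IHhyll HG HD (plc_popen A 0 (WFree x) HC I) Hw (upd rho x v)
                 (sG_upd R rho G x v ltac:(nin H) HsG) Ms (sctx_upd R rho D Ms x v ltac:(nin H) HMs)).
    apply (sem_popen R A [] 0) in K; auto. simpl in K.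
    assert (Ex : upd rho x v x = v) by (unfold upd; rewrite Nat.eqb_refl; auto).
    rewrite Ex in K.
    rewrite <- (weval_fv rho) in K by (intros y Hy; rewrite upd_other; auto; intros ->; apply H; rewrite ?in_app_iff; tauto).
    apply (sem_fv R A [v] rho (upd rho x v)); auto.
    intros y Hy; rewrite upd_other; auto; intros ->; apply H; rewrite ?in_app_iff; tauto.
    exact I.
  -
    inversion HMs as [|? M0 ? Ms0 HM0 HMs0]; subst. inversion HD as [|? ? HD0 HD1]; subst. simpl in *.
    apply (IHhyll HG) with (Ms := M0 :: Ms0); auto.
    + constructor; auto; simpl. split; [apply plc_popen|]; try tauto. apply wlc_wbnd; auto.
    + constructor; auto. simpl. apply (sem_popen R A [] 0 rho e); auto. apply wlc_wbnd; auto. apply HM0.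
  -
    simpl in *. exists (weval rho e).
    apply (sem_popen R A [] 0 rho e); auto. apply wlc_wbnd; auto.
    apply IHhyll; auto. apply plc_popen; auto. apply wlc_wbnd; auto.
  -
    inversion HMs as [|? M0 ? Ms0 HM0 HMs0]; subst. inversion HD as [|? ? HD0 HD1]; subst. simpl in *.
    destruct HM0 as [v K].
    assert (Ex : upd rho x v x = v) by (unfold upd; rewrite Nat.eqb_refl; auto).
    assert (K2 : sem R [] (upd rho x v) (popen 0 (WFree x) A) (weval (upd rho x v) u) M0).
    { apply (sem_popen R A [] 0 (upd rho x v) (WFree x)); [reflexivity| exact I|]. simpl. rewrite Ex.
      rewrite <- (weval_fv rho) by (intros y Hy; rewrite upd_other; auto; intros ->; apply H; rewrite ?in_app_iff; tauto).
      apply (sem_fv R A [v] rho); auto.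
      intros y Hy; rewrite upd_other; auto; intros ->; apply H; rewrite ?in_app_iff; tauto. }
    assert (K3 := IHhyll HG ltac:(constructor; auto; simpl; split; [exact (plc_popen A 0 (WFree x) (proj1 HD0) I)| tauto]) HC Hw (upd rho x v)
                 (sG_upd R rho G x v ltac:(nin H) HsG) (M0 :: Ms0)
                 ltac:(constructor; [exact K2| apply (sctx_upd R rho D Ms0 x v ltac:(nin H) HMs0)])).
    simpl in K3.
    rewrite <- (weval_fv rho) in K3 by (intros y Hy; rewrite upd_other; auto; intros ->; apply H; rewrite ?in_app_iff; tauto).
    apply (sem_fv R C [] rho (upd rho x v)); auto.
    intros y Hy; rewrite upd_other; auto; intros ->; apply H; rewrite ?in_app_iff; tauto.
Qed.

Lemma sem_tensor R env rho A B u M : sem R env rho (Tensor A B) u M <->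
  exists M1 M2, red R M (M1 ++ M2) /\ sem R env rho A u M1 /\ sem R env rho B u M2.
Proof. reflexivity. Qed.

Lemma sem_enc R env rho s : forall k v M,
  sem R env rho (tensor_list (enc_lits k s)) v M <-> red R M (atoms k s v).
Proof.
  induction s as [|b s IH]; intros k v M; [simpl; tauto|].
  destruct s as [|b' s'].
  - simpl. unfold enc_lit. destruct b; simpl; tauto.
  - change (sem R env rho (Tensor (enc_lit b k) (tensor_list (enc_lits (S k) (b' :: s')))) v M
      <-> red R M ((sym b, k, v) :: atoms (S k) (b' :: s') v)).
    rewrite sem_tensor. split.
    + intros (M1 & M2 & H1 & H2 & H3). eapply red_trans; [eauto|].
      change ((sym b, k, v) :: atoms (S k) (b' :: s') v) with ([(sym b, k, v)] ++ atoms (S k) (b' :: s') v).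
      apply red_app; [unfold enc_lit in H2; destruct b; exact H2 | apply (IH (S k) v M2); exact H3].
    + intros H. exists [(sym b, k, v)], (atoms (S k) (b' :: s') v). split; [auto|].
      split. unfold enc_lit; destruct b; apply red_refl. apply IH. apply red_refl.
Qed.

Lemma pshift_enc c s : forall k, pshift c (tensor_list (enc_lits k s)) = tensor_list (enc_lits k s).
Proof.
  induction s as [|b s IH]; intros k; auto. destruct s as [|b' s'].
  - reflexivity.
  - change (Tensor (pshift c (enc_lit b k)) (pshift c (tensor_list (enc_lits (S k) (b' :: s'))))
      = Tensor (enc_lit b k) (tensor_list (enc_lits (S k) (b' :: s')))).
    rewrite IH. reflexivity.
Qed.

Lemma popen_enc j e s : forall k, popen j e (tensor_list (enc_lits k s)) = tensor_list (enc_lits k s).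
Proof.
  induction s as [|b s IH]; intros k; auto. destruct s as [|b' s'].
  - reflexivity.
  - change (Tensor (popen j e (enc_lit b k)) (popen j e (tensor_list (enc_lits (S k) (b' :: s'))))
      = Tensor (enc_lit b k) (tensor_list (enc_lits (S k) (b' :: s')))).
    rewrite IH. reflexivity.
Qed.

Lemma plc_enc j s : forall k, plc j (tensor_list (enc_lits k s)).
Proof.
  induction s as [|b s IH]; intros k; simpl; auto. destruct s as [|b' s'].
  - simpl; auto.
  - change (plc j (enc_lit b k) /\ plc j (tensor_list (enc_lits (S k) (b' :: s')))).
    split; auto. exact I.
Qed.

Lemma hyll_id G s : forall k u, hyll G [(tensor_list (enc_lits k s), u)] (tensor_list (enc_lits k s)) u.
Proof.
  induction s as [|b s IH]; intros k u.
  - simpl. apply h_oneL, h_oneR.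
  - destruct s as [|b' s'].
    + simpl. apply h_init. intro; reflexivity.
    + change (hyll G [(Tensor (enc_lit b k) (tensor_list (enc_lits (S k) (b' :: s'))), u)]
                 (Tensor (enc_lit b k) (tensor_list (enc_lits (S k) (b' :: s')))) u).
      apply h_tensorL.
      apply (h_tensorR G [(enc_lit b k, u)] [(tensor_list (enc_lits (S k) (b' :: s')), u)]).
      * apply h_init; intro; reflexivity.
      * apply IH.
Qed.

Definition sumw (M : list res) : nat := list_sum (map snd M).

Lemma sumw_app M N : sumw (M ++ N) = sumw M + sumw N.
Proof. unfold sumw; rewrite map_app, list_sum_app; auto. Qed.

Lemma sumw_perm M N : Permutation M N -> sumw M = sumw N.
Proof. induction 1; unfold sumw in *; simpl in *; lia. Qed.

Lemma sumw_atoms s : forall k v, sumw (atoms k s v) = length s * v.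
Proof. induction s; intros; simpl; auto. unfold sumw in *; simpl. rewrite IHs. lia. Qed.

Lemma length_atoms s : forall k v, length (atoms k s v) = length s.
Proof. induction s; intros; simpl; auto. Qed.


Lemma step_sumw n R M N : (forall r, In r R -> length (pre r) = n /\ length (post r) = n) ->
  step R M N -> sumw N = sumw M + n.
Proof.
  intros HR (r & v & K & Hin & H1 & H2). apply sumw_perm in H1, H2.
  rewrite H1, H2, !sumw_app, !sumw_atoms. destruct (HR r Hin) as [-> ->]. nia.
Qed.

Lemma red_sumw n R M N : (forall r, In r R -> length (pre r) = n /\ length (post r) = n) ->
  red R M N -> sumw M <= sumw N.
Proof.
  intros HR; induction 1.
  - apply sumw_perm in H; lia.
  - apply (step_sumw n) in H; auto. lia.
Qed.

Lemma in_atoms p i x s : forall k v, In (p, i, x) (atoms k s v) <->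
  x = v /\ k <= i /\ exists b, nth_error s (i - k) = Some b /\ p = sym b.
Proof.
  induction s as [|b s IH]; intros k v; simpl.
  - split; [tauto|]. intros (_ & _ & b & Hb & _). destruct (i - k); discriminate.
  - rewrite IH. split.
    + intros [E|(H1 & H2 & b' & H3 & H4)].
      * inversion E; subst. split; auto; split; auto. rewrite Nat.sub_diag. exists b; auto.
      * split; auto; split; [lia|]. exists b'. replace (i - k) with (S (i - S k)) by lia. auto.
    + intros (H1 & H2 & b' & H3 & H4). destruct (Nat.eq_dec i k).
      * subst. left. rewrite Nat.sub_diag in H3. simpl in H3. inversion H3; subst; auto.
      * right. split; auto; split; [lia|]. exists b'. replace (i - k) with (S (i - S k)) in H3 by lia. auto.
Qed.

Lemma sym_inj b b' : sym b = sym b' -> b = b'.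
Proof. destruct b, b'; simpl; congruence. Qed.

Lemma atoms_perm s t v v' : length s = length t -> 0 < length s ->
  Permutation (atoms 0 s v) (atoms 0 t v') -> s = t /\ v = v'.
Proof.
  intros Hl Hp HP.
  assert (Hin : forall p i x, In (p, i, x) (atoms 0 s v) -> In (p, i, x) (atoms 0 t v')).
  { intros; eapply Permutation_in; eauto. }
  split.
  - apply nth_error_ext. intros i.
    destruct (nth_error s i) as [b|] eqn:E.
    + assert (H : In (sym b, i, v) (atoms 0 s v)).
      { apply in_atoms. split; auto; split; [lia|]. exists b. rewrite Nat.sub_0_r; auto. }
      apply Hin, in_atoms in H. destruct H as (_ & _ & b' & H1 & H2).
      rewrite Nat.sub_0_r in H1. apply sym_inj in H2. subst; auto.
    + symmetry. apply nth_error_None. apply nth_error_None in E. lia.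
  - destruct s as [|b s]; simpl in Hp; [lia|].
    assert (H : In (sym b, 0, v) (atoms 0 (b :: s) v)) by (simpl; auto).
    apply Hin, in_atoms in H. tauto.
Qed.

Theorem proposition1 (n : nat) (R : list rule) (s s' : state) (w : nat) :
  0 < n ->
  length s = n -> length s' = n ->
  (forall r, In r R -> length (pre r) = n /\ length (post r) = n) ->
  ((exists r, In r R /\ transition r s s') <->
   hyll (rules_ctx R) [(enc_state s, WConst w)]
        (delta 1 (enc_state s')) (WConst w)).
Proof.
  intros Hn Hs Hs' HR. split.
  - intros (r & Hin & [Hpre Hpost]).
    apply (h_copy _ _ (enc_rule r) (WConst 0)).
    { unfold rules_ctx. apply in_map_iff. exists r; auto. }
    apply (h_allL _ _ _ (WConst w)); [exact I|].
    unfold enc_rule, delta, enc_state. cbn [popen wopen Nat.eqb].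
    rewrite !pshift_enc, !popen_enc. rewrite Hpre, Hpost.
    apply (h_lolliL _ [(tensor_list (enc_lits 0 s), WConst w)] []).
    + apply h_atR. apply hyll_id.
    + apply h_atL. apply h_downR. cbn [popen wopen Nat.eqb]. rewrite popen_enc.
      apply h_atR. apply h_downL. cbn [popen wopen Nat.eqb]. rewrite popen_enc.
      apply h_atL. apply hyll_id.
  - intros H.
    assert (HG : forall rho A u, In (A, u) (rules_ctx R) -> sem R [] rho A (weval rho u) []).
    { intros rho A u Hin. unfold rules_ctx in Hin. apply in_map_iff in Hin as (r & E & Hr).
      inversion E; subst. unfold enc_rule, delta, enc_state. simpl sem. intros v N HN.
      rewrite pshift_enc in *. simpl.
      apply sem_enc. apply sem_enc in HN. simpl in HN. eapply red_trans; [exact HN|].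
      eapply redS; [|apply red_refl]. exists r, v, []. rewrite !app_nil_r.
      split; auto; split; apply Permutation_refl. }
    assert (Hwf : wfc (rules_ctx R)).
    { unfold wfc, rules_ctx. apply Forall_forall. intros [A u] Hin.
      apply in_map_iff in Hin as (r & E & _). inversion E; subst. simpl.
      unfold delta, enc_state. rewrite pshift_enc. repeat split; auto using plc_enc; simpl; lia. }
    assert (K := sound R _ _ _ _ H Hwf
                  ltac:(constructor; [split; [apply plc_enc| exact I]| constructor])
                  ltac:(unfold delta, enc_state; rewrite pshift_enc; simpl; repeat split; auto using plc_enc; lia)
                  I (fun _ => 0) (HG _) [atoms 0 s w]
                  ltac:(constructor; [apply sem_enc; apply red_refl| constructor])).
    simpl in K. rewrite app_nil_r in K. unfold delta, enc_state in K. simpl sem in K.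
    rewrite pshift_enc in K. apply sem_enc in K. simpl in K.
    inversion K as [M N HP | M N K0 Hst Hr]; subst.
    + apply sumw_perm in HP. rewrite !sumw_atoms in HP. nia.
    + assert (E1 := step_sumw _ R _ _ HR Hst).
      inversion Hr as [? ? HP2 | ? N2 ? Hst2 Hr2]; subst.
      * destruct Hst as (r & v & L & Hin & H1 & H2).
        assert (HL : L = []).
        { apply Permutation_length in H1. rewrite length_app, !length_atoms in H1.
          destruct (HR r Hin) as [E _]. destruct L; auto; simpl in H1; lia. }
        subst L. rewrite app_nil_r in H1, H2.
        destruct (HR r Hin) as [Epre Epost].
        apply atoms_perm in H1 as [-> ->]; try lia.
        assert (H3 : Permutation (atoms 0 s' (v + 1)) (atoms 0 (post r) (v + 1))).
        { eapply perm_trans; [apply Permutation_sym; eauto| auto]. }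
        apply atoms_perm in H3 as [-> _]; try lia.
        exists r; split; auto; split; auto.
      * apply (step_sumw _ R _ _ HR) in Hst2. apply (red_sumw _ R _ _ HR) in Hr2.
        rewrite !sumw_atoms in *. nia.
Qed.
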